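(* Let $\mathbf{X}$ be a finite collection of discrete random variables, and let $B_1,\dots,B_m$ be buckets with associated variable sets $\mathbf{X}_{B_1},\dots,\mathbf{X}_{B_m}\subseteq\mathbf{X}$ that are pairwise disjoint. Let $\mathbf{X}'=\mathbf{X}\setminus\bigcup_{B}\mathbf{X}_B$. Let $p(\mathbf{X})$ be the distribution of a normalized, smooth, decomposable probabilistic circuit, written as a discrete mixture $$p(\mathbf{x})=\sum_{z}p(z)\prod_{B}p_z(\mathbf{x}_B)\prod_{X_i\in\mathbf{X}'}p_z(x_i),$$ where $Z$ is the discrete latent variable induced by the sum nodes, $p(z)$ is its distribution, each $p_z(\mathbf{X}_B)$ is a categorical distribution over $\mathbf{X}_B$ and each $p_z(X_i)$ is a univariate distribution. Let $q(\mathbf{X})$ be a distribution of the same form $$q(\mathbf{x})=\sum_{z}p(z)\prod_{B}q_z(\mathbf{x}_B)\prod_{X_i\in\mathbf{X}'}p_z(x_i),$$ where each $q_z(\mathbf{X}_B)$ is a categorical distribution over $\mathbf{X}_B$. Then $$H\big(p(\mathbf{X}),q(\mathbf{X})\big)\;\le\;\sum_{B}\mathbb{E}_{z\sim p(Z)}\Big[H\big(p_z(\mathbf{X}_B),q_z(\mathbf{X}_B)\big)\Big]+H\big(p(\mathbf{X}',Z)\big),$$ where $p(\mathbf{x}',z)=p(z)\prod_{X_i\in\mathbf{X}'}p_z(x_i)$.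
   Context: $H(p,q)=-\sum_{\mathbf{x}}p(\mathbf{x})\log q(\mathbf{x})$ denotes cross entropy and $H(p)$ denotes entropy. The buckets arise from linear probabilistic propositional logic constraints of the form $\sum_{i_c}\tau_{i_c}\,p(F_{i_c})\le\alpha_c$, where each $F_{i_c}$ is a propositional formula over Boolean variables $\mathbf{X}_c\subseteq\mathbf{X}$; constraints sharing variables are grouped into the same bucket $B$, and $\mathbf{X}_B=\bigcup_{c\in B}\mathbf{X}_c$, so distinct buckets have disjoint variable sets. The circuit is assumed to keep all variables of a bucket together: for every node $v$ and bucket $B$, if $\mathbf{X}_B\cap\mathrm{scope}(v)\neq\emptyset$ then $\mathbf{X}_B\subseteq\mathrm{scope}(v)$, which yields the displayed mixture form of $p$ with components indexed by the states $z$ of the latent variable $Z$. *)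

(* Defs.v *)
From HB Require Import structures.
From mathcomp Require Import all_boot all_order all_algebra.
From mathcomp Require Import all_classical all_reals all_analysis.
Set Implicit Arguments. Unset Strict Implicit. Unset Printing Implicit Defensive.
Import Order.TTheory GRing.Theory Num.Theory.
Local Open Scope ring_scope.

Definition is_dist (R : realType) (T : finType) (p : T -> R) : Prop :=
  (forall x, 0 <= p x) /\ \sum_(x : T) p x = 1.

Definition xent (R : realType) (T : finType) (p q : T -> R) : \bar R :=
  \big[adde/0%E]_(x : T)
     (if p x == 0 then 0%E
      else if q x == 0 then +oo%E
      else (- (p x * ln (q x)))%:E).

Definition ent (R : realType) (T : finType) (p : T -> R) : \bar R := xent p p.

(* Configurations: joint states of each bucket (x_B)_B together with the
   states of the remaining variables X' = (x_i)_i. *)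
Definition bconf (m : nat) (TB : 'I_m -> finType) := {dffun forall b : 'I_m, TB b}.
Definition oconf (n : nat) (TX : 'I_n -> finType) := {dffun forall i : 'I_n, TX i}.

Definition mixture (R : realType) (Z : finType) (m n : nat)
  (TB : 'I_m -> finType) (TX : 'I_n -> finType)
  (pZ : Z -> R) (rB : forall (z : Z) (b : 'I_m), TB b -> R)
  (pX : forall (z : Z) (i : 'I_n), TX i -> R)
  (x : (bconf TB * oconf TX)%type) : R :=
  \sum_(z : Z) pZ z * (\prod_(b < m) rB z b (x.1 b)) * \prod_(i < n) pX z i (x.2 i).

Definition joint_rest (R : realType) (Z : finType) (n : nat)
  (TX : 'I_n -> finType) (pZ : Z -> R) (pX : forall (z : Z) (i : 'I_n), TX i -> R)
  (y : (oconf TX * Z)%type) : R :=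
  pZ y.2 * \prod_(i < n) pX y.2 i (y.1 i).

(* Main.v *)
Require Import Defs.
From HB Require Import structures.
From mathcomp Require Import all_boot all_order all_algebra.
From mathcomp Require Import all_classical all_reals all_analysis.
From mathcomp Require Import ring.
Import Order.TTheory GRing.Theory Num.Theory.
Local Open Scope ring_scope.

Lemma sum_prod_dffun (R : comNzRingType) (I : finType) (T : I -> finType)
  (h : forall i, T i -> R) :
  \sum_(f : {dffun forall i, T i}) \prod_i h i (f i) = \prod_i \sum_(y : T i) h i y.
Proof.
pose P i := [ffun y : T i => h i y].
rewrite (reindex (@dffun_of_fprod _ T)); last exact/onW_bij/dffun_of_fprod_bij.
transitivity (\sum_(t : fprod T) \prod_(i in I) P i (t i)).
  apply: eq_bigr => t _; apply: eq_bigr => i _; by rewrite !ffunE.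
rewrite big_fprod.
transitivity (\prod_i \sum_(j in tagged_with T i) untag 0 (P i) j); last first.
  apply: eq_bigr => i _; rewrite (big_tag (fun i y => h i y)); apply: eq_bigr => j _.
  by rewrite /untag; case: eqP => // e; rewrite ffunE.
by rewrite bigA_distr_big_dep.
Qed.

Lemma sum_pair (R : nmodType) (A B : finType) (F : A * B -> R) :
  \sum_(p : A * B) F p = \sum_a \sum_b F (a, b).
Proof. by rewrite pair_bigA; apply: eq_bigr => -[]. Qed.

Section X.
Variables (R : realType).

Lemma dist_le1 (T : finType) (d : T -> R) : is_dist d -> forall x, d x <= 1.
Proof.
move=> [d0 d1] x; rewrite -d1 (bigD1 x) //= lerDl sumr_ge0 //.
Qed.

Lemma prod_dist1 (I : finType) (T : I -> finType) (d : forall i, T i -> R) :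
  (forall i, is_dist (d i)) ->
  \sum_(f : {dffun forall i, T i}) \prod_i d i (f i) = 1.
Proof. by move=> H; rewrite sum_prod_dffun big1 // => i _; case: (H i). Qed.

Lemma ln_prod (I : Type) (r : seq I) (P : pred I) (F : I -> R) :
  (forall i, P i -> 0 < F i) ->
  ln (\prod_(i <- r | P i) F i) = \sum_(i <- r | P i) ln (F i).
Proof.
move=> H.
have [] := @big_ind2 R R (fun a s => 0 < a /\ ln a = s) 1 *%R 0 +%R
  (conj ltr01 (@ln1 R)) _ I r P F (fun i => ln (F i)) _ => //.
- move=> a s b t [a0 <-] [b0 <-]; split; first exact: mulr_gt0.
  by rewrite lnM ?posrE.
- by move=> i Pi; split; [exact: H|].
Qed.

Lemma ge0_nNy (x : \bar R) : (0 <= x)%E -> x != -oo%E.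
Proof. by case: x. Qed.

Variable (T : finType).
Implicit Types p q : T -> R.

Lemma xentE p q : xent p q = (\sum_(x : T) (if p x == 0%R then 0 else if q x == 0%R then +oo else (- (p x * ln (q x)))%:E))%E.
Proof. by []. Qed.

Lemma xent_ge0 p q : (forall x, 0 <= p x) -> (forall x, q x <= 1) -> (0 <= xent p q)%E.
Proof.
move=> p0 q1; rewrite xentE; apply: sume_ge0 => x _.
case: ifP => // _; case: ifP => // _.
by rewrite lee_fin oppr_ge0 mulr_ge0_le0 // ln_le0.
Qed.

Lemma xent_fin p q : (forall x, p x != 0 -> q x != 0) ->
  xent p q = (\sum_x - (p x * ln (q x)))%:E.
Proof.
move=> H; rewrite xentE -sumEFin; apply: eq_bigr => x _.
case: ifPn => [/eqP->|px]; first by rewrite mul0r oppr0.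
by rewrite (negPf (H x px)).
Qed.

Lemma xent_inf p q x : (forall x, 0 <= p x) -> (forall x, q x <= 1) ->
  p x != 0 -> q x = 0 -> xent p q = +oo%E.
Proof.
move=> p0 q1 px qx; rewrite xentE (bigD1 x) //= (negPf px) qx eqxx addye //.
apply: ge0_nNy; apply: sume_ge0 => y _.
case: ifP => // _; case: ifP => // _.
by rewrite lee_fin oppr_ge0 mulr_ge0_le0 // ln_le0.
Qed.
End X.

Section Main.
Variables (R : realType) (Z : finType) (m n : nat)
  (TB : 'I_m -> finType) (TX : 'I_n -> finType)
  (pZ : Z -> R)
  (pB qB : forall (z : Z) (b : 'I_m), TB b -> R)
  (pX : forall (z : Z) (i : 'I_n), TX i -> R).
Hypotheses (dZ : is_dist pZ) (dB : forall z b, is_dist (pB z b))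
  (dQ : forall z b, is_dist (qB z b)) (dX : forall z i, is_dist (pX z i)).
Hypothesis H : forall z b y, 0 < pZ z -> pB z b y != 0 -> qB z b y != 0.

Let Pt z (x : (bconf TB * oconf TX)%type) :=
  pZ z * (\prod_(b < m) pB z b (x.1 b)) * \prod_(i < n) pX z i (x.2 i).
Let Qt z (x : (bconf TB * oconf TX)%type) :=
  pZ z * (\prod_(b < m) qB z b (x.1 b)) * \prod_(i < n) pX z i (x.2 i).

Let pZ0 z : 0 <= pZ z. Proof. by case: dZ. Qed.
Let pB0 z b y : 0 <= pB z b y. Proof. by case: (dB z b). Qed.
Let qB0 z b y : 0 <= qB z b y. Proof. by case: (dQ z b). Qed.
Let pX0 z i y : 0 <= pX z i y. Proof. by case: (dX z i). Qed.

Let Pt0 z x : 0 <= Pt z x.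
Proof. by rewrite /Pt !mulr_ge0 // prodr_ge0. Qed.
Let Qt0 z x : 0 <= Qt z x.
Proof. by rewrite /Qt !mulr_ge0 // prodr_ge0. Qed.

Let Pt_pos z x : Pt z x != 0 ->
  [/\ 0 < pZ z, forall b, 0 < pB z b (x.1 b), forall b, 0 < qB z b (x.1 b)
    & forall i, 0 < pX z i (x.2 i)].
Proof.
rewrite /Pt !mulf_eq0 !negb_or => /andP[/andP[hz /prodf_neq0 hb] /prodf_neq0 hi].
have hz' : 0 < pZ z by rewrite lt_def hz pZ0.
split => //.
- by move=> b; rewrite lt_def (hb b isT) pB0.
- by move=> b; rewrite lt_def qB0 andbT; apply: H => //; apply: (hb b isT).
- by move=> i; rewrite lt_def (hi i isT) pX0.
Qed.

Lemma step1 (x : (bconf TB * oconf TX)%type) :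
  - (mixture pZ pB pX x * ln (mixture pZ qB pX x)) <= \sum_z - (Pt z x * ln (Qt z x)).
Proof.
rewrite /mixture mulr_suml -sumrN; apply: ler_sum => z _.
rewrite lerN2 -/(Pt z x).
have [->|Pn] := eqVneq (Pt z x) 0; first by rewrite !mul0r.
have [hz hb hq hi] := @Pt_pos z x Pn.
have Qp : 0 < Qt z x by rewrite /Qt !mulr_gt0 // prodr_gt0.
apply: ler_wpM2l; first exact: Pt0.
have Qle : Qt z x <= \sum_z' Qt z' x.
  by rewrite (bigD1 z) //= lerDl sumr_ge0.
rewrite ler_ln ?posrE //; exact: lt_le_trans Qle.
Qed.

Lemma step2 z (x : (bconf TB * oconf TX)%type) :
  - (Pt z x * ln (Qt z x)) = \sum_b - (Pt z x * ln (qB z b (x.1 b)))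
     + - (Pt z x * ln (joint_rest pZ pX (x.2, z))).
Proof.
have [->|Pn] := eqVneq (Pt z x) 0.
  by rewrite big1 => [|b _]; rewrite !mul0r ?oppr0 ?addr0.
have [hz hb hq hi] := @Pt_pos z x Pn.
have -> : Qt z x = (\prod_b qB z b (x.1 b)) * joint_rest pZ pX (x.2, z).
  by rewrite /Qt /joint_rest /=; ring.
rewrite lnM ?posrE ?prodr_gt0 //; last by rewrite /joint_rest mulr_gt0 // prodr_gt0.
by rewrite ln_prod // mulrDr mulr_sumr opprD sumrN.
Qed.

Lemma stepA b z : \sum_x - (Pt z x * ln (qB z b (x.1 b))) =
  pZ z * \sum_y - (pB z b y * ln (qB z b y)).
Proof.
rewrite sum_pair /=.
transitivity (\sum_(xb : bconf TB)
   - (pZ z * (\prod_b' pB z b' (xb b') * ln (qB z b (xb b))))).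
  apply: eq_bigr => xb _.
  transitivity (\sum_(xo : oconf TX)
     (- (pZ z * (\prod_b' pB z b' (xb b') * ln (qB z b (xb b))))) * \prod_i pX z i (xo i)).
    by apply: eq_bigr => xo _; rewrite /Pt /=; ring.
  by rewrite -mulr_sumr prod_dist1 // mulr1.
pose g b' (y : TB b') := if b' == b then ln (qB z b' y) else 1.
have E1 (xb : bconf TB) : \prod_b' pB z b' (xb b') * ln (qB z b (xb b)) =
    \prod_b' (pB z b' (xb b') * g b' (xb b')).
  rewrite big_split /=; congr (_ * _); rewrite (bigD1 b) //= /g eqxx big1 ?mulr1 //.
  by move=> b' /negPf ->.
have E2 : \sum_(xb : bconf TB) \prod_b' (pB z b' (xb b') * g b' (xb b')) =
    \sum_y pB z b y * ln (qB z b y).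
  rewrite (@sum_prod_dffun _ _ TB (fun b2 y => pB z b2 y * g b2 y)) (bigD1 b) //= [X in _ * X]big1 ?mulr1.
    by apply: eq_bigr => y _; rewrite /g eqxx.
  move=> b' /negPf nb; under eq_bigr do rewrite /g nb mulr1.
  by case: (dB z b').
transitivity (\sum_(xb : bconf TB) - (pZ z * \prod_b' (pB z b' (xb b') * g b' (xb b')))).
  by apply: eq_bigr => xb _; rewrite E1.
by rewrite sumrN -mulr_sumr E2 sumrN mulrN.
Qed.

Lemma stepB : \sum_x \sum_z - (Pt z x * ln (joint_rest pZ pX (x.2, z))) =
  \sum_y - (joint_rest pZ pX y * ln (joint_rest pZ pX y)).
Proof.
rewrite exchange_big /= [RHS]sum_pair [RHS]exchange_big /=; apply: eq_bigr => z _.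
rewrite sum_pair exchange_big /=; apply: eq_bigr => xo _.
transitivity (\sum_(xb : bconf TB) (\prod_b pB z b (xb b)) *
   - (joint_rest pZ pX (xo, z) * ln (joint_rest pZ pX (xo, z)))).
  by apply: eq_bigr => xb _; rewrite /Pt /joint_rest /=; ring.
by rewrite -mulr_suml prod_dist1 // mul1r.
Qed.

Lemma real_main :
  \sum_x - (mixture pZ pB pX x * ln (mixture pZ qB pX x)) <=
  \sum_b \sum_z pZ z * \sum_y - (pB z b y * ln (qB z b y))
  + \sum_y - (joint_rest pZ pX y * ln (joint_rest pZ pX y)).
Proof.
apply: le_trans; first by apply: ler_sum => x _; exact: step1.
under eq_bigr do under eq_bigr do rewrite step2.
under eq_bigr do rewrite big_split /=.
rewrite big_split /= stepB lerD2r exchange_big /=.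
under eq_bigr do rewrite exchange_big.
rewrite exchange_big /=.
under eq_bigr => b _ do under eq_bigr => z _ do rewrite stepA.
by [].
Qed.

Lemma mix_nz x : mixture pZ pB pX x != 0 -> mixture pZ qB pX x != 0.
Proof.
move=> hp; apply/negP => /eqP hq; move/negP: hp; apply; apply/eqP.
apply: big1 => z _; apply/eqP/negPn/negP => Pn.
have [hz hb hq' hi] := @Pt_pos z x Pn.
have Qp : 0 < Qt z x by rewrite /Qt !mulr_gt0 // prodr_gt0.
have Qle : Qt z x <= \sum_z' Qt z' x.
  by rewrite (bigD1 z) //= lerDl sumr_ge0.
by move: (lt_le_trans Qp Qle); rewrite -[X in _ < X]/(mixture pZ qB pX x) hq ltxx.
Qed.

End Main.

Lemma jr_dist (R : realType) (Z : finType) (n : nat) (TX : 'I_n -> finType)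
  (pZ : Z -> R) (pX : forall (z : Z) (i : 'I_n), TX i -> R) :
  is_dist pZ -> (forall z i, is_dist (pX z i)) -> is_dist (joint_rest pZ pX).
Proof.
move=> [z0 z1] dX; split.
  move=> y; rewrite /joint_rest mulr_ge0 // prodr_ge0 // => i _; by case: (dX y.2 i).
rewrite sum_pair exchange_big /= -z1; apply: eq_bigr => z _.
by rewrite /joint_rest /= -mulr_sumr prod_dist1 // mulr1.
Qed.

Theorem theorem1 (R : realType) (Z : finType) (m n : nat)
  (TB : 'I_m -> finType) (TX : 'I_n -> finType)
  (pZ : Z -> R)
  (pB qB : forall (z : Z) (b : 'I_m), TB b -> R)
  (pX : forall (z : Z) (i : 'I_n), TX i -> R) :
  is_dist pZ ->
  (forall z b, is_dist (pB z b)) ->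
  (forall z b, is_dist (qB z b)) ->
  (forall z i, is_dist (pX z i)) ->
  (xent (mixture pZ pB pX) (mixture pZ qB pX) <=
   \sum_(b < m) \sum_(z : Z) (pZ z)%:E * xent (pB z b) (qB z b)
   + ent (joint_rest pZ pX))%E.
Proof.
move=> dZ dB dQ dX.
have djr := @jr_dist R Z n TX pZ pX dZ dX.
have E0 : (0 <= ent (joint_rest pZ pX))%E.
  by apply: xent_ge0; [case: djr | exact: dist_le1].
have T0 b' z' : (0 <= (pZ z')%:E * xent (pB z' b') (qB z' b'))%E.
  apply: mule_ge0; first by rewrite lee_fin; case: dZ.
  by apply: xent_ge0; [case: (dB z' b') | exact: dist_le1].
have [[z [b [y [hz [hp hq]]]]]|N] := pselect (exists z b (y : TB b),
   0 < pZ z /\ pB z b y != 0 /\ qB z b y = 0).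
  have inf : xent (pB z b) (qB z b) = +oo%E.
    by apply: (@xent_inf R (TB b) _ _ y) => //; [case: (dB z b) | exact: dist_le1].
  rewrite (bigD1 b) //= (bigD1 z) //= inf mulry gtr0_sg // mul1e !addye ?leey //.
  - exact: ge0_nNy.
  - by apply: ge0_nNy; apply: sume_ge0 => b' _; apply: sume_ge0.
  - by apply: ge0_nNy; apply: sume_ge0.
have H' : forall z b y, 0 < pZ z -> pB z b y != 0 -> qB z b y != 0.
  by move=> z b y hz hp; apply/eqP => hq; apply: N; exists z, b, y.
rewrite /ent (@xent_fin R _ (joint_rest pZ pX) (joint_rest pZ pX)) //.
rewrite xent_fin; last by move=> x; apply: mix_nz.
have termE b z : ((pZ z)%:E * xent (pB z b) (qB z b) =
    (pZ z * \sum_y - (pB z b y * ln (qB z b y)))%:E)%E.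
  have [->|nz] := eqVneq (pZ z) 0; first by rewrite mul0e mul0r.
  have hz : 0 < pZ z by rewrite lt_def nz /=; case: dZ => h _; exact: h.
  by rewrite xent_fin ?EFinM // => y; apply: H'.
have S : \sum_(b < m) \sum_(z : Z) ((pZ z)%:E * xent (pB z b) (qB z b))%E =
   (\sum_(b < m) \sum_(z : Z) pZ z * \sum_y - (pB z b y * ln (qB z b y)))%:E.
  rewrite -sumEFin; apply: eq_bigr => b _; rewrite -sumEFin; apply: eq_bigr => z _.
  exact: termE.
rewrite S -EFinD lee_fin.
by apply: real_main.
Qed.
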